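(* With the setting in the context, let $m\in\mathrm{hom}(C,G)_0$. The clock operator $Q_m$ distinguishes between ground states, in the sense that for every $f\in\ker(\delta^0)$ the vector $Q_m\mathcal A_0|f\rangle$ is a scalar multiple of $\mathcal A_0|f\rangle$, if and only if $m\in\ker(\delta_0)$, i.e. $m(\delta^{-1}t)=1$ for all $t\in\mathrm{hom}(C,G)^{-1}$.
   Context: $(C_\bullet,\partial^C_\bullet)$ is a chain complex with each $C_n$ free abelian on a finite set $K_n$, $K_n\ne\emptyset$ for finitely many $n$; $(G_\bullet,\partial^G_\bullet)$ is a chain complex of finite abelian groups. $\mathrm{hom}(C,G)^p=\prod_n\mathrm{Hom}(C_n,G_{n-p})$ with $(\delta^pf)_n=f_{n-1}\partial^C_n-(-1)^p\partial^G_{n-p}f_n$. $\mathrm{hom}(C,G)_p=\mathrm{Hom}(\mathrm{hom}(C,G)^p,U(1))$ (written additively), $\chi_m(f)=m(f)$, and $\delta_0:\mathrm{hom}(C,G)_0\to\mathrm{hom}(C,G)_{-1}$, $\delta_0m=m\circ\delta^{-1}$. $\mathcal H=\bigotimes_n\bigotimes_{x\in K_n}\mathbb C[G_n]$ with orthonormal basis $|f\rangle$, $f\in\mathrm{hom}(C,G)^0$. $Q_m|f\rangle=\chi_m(f)|f\rangle$, $P_t|f\rangle=|f+t\rangle$, $A_t=P_{\delta^{-1}t}$ for $t\in\mathrm{hom}(C,G)^{-1}$, and $\mathcal A_0=\frac1{|\mathrm{hom}(C,G)^{-1}|}\sum_{t\in\mathrm{hom}(C,G)^{-1}}A_t$.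 *)

(* Defs.v *)
From HB Require Import structures.
From mathcomp Require Import all_boot all_order all_algebra.
Set Implicit Arguments. Unset Strict Implicit. Unset Printing Implicit Defensive.
Import Order.TTheory GRing.Theory Num.Theory.
Local Open Scope ring_scope.

(* Encoding of the data:
   - the bases K_n of the free abelian groups C_n are packed into one finite
     type K with a degree map deg : K -> int, K_n = [pred x | deg x == n];
   - the boundary d^C_n is given by its integer matrix a : for deg x = n,
     d^C_n x = \sum_(y | deg y == n - 1) a x y * y;
   - G : int -> finZmodType, with boundaries dG n : G n -> G (n - 1);
   - an element of Hom(C_n, G_m) is identified with its values on the basis
     K_n, hence hom(C,G)^p = prod_n Hom(C_n, G_(n-p)) is the finite type of
     dependent functions forall x : K, G (deg x - p). *)

(* transport between (possibly different) degrees: identity when the indices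
   agree, 0 otherwise (only used where the indices agree or the term
   must vanish) *)
Definition gcast (G : int -> finZmodType) (n k : int) (g : G n) : G k :=
  match @eqP _ n k with
  | ReflectT e => eq_rect n G g k e
  | ReflectF _ => 0
  end.

Definition homp (K : finType) (deg : K -> int) (G : int -> finZmodType) (p : int)
  := {dffun forall x : K, G (deg x - p)}.

Definition hzero K deg G p : @homp K deg G p := [ffun x => 0].
Definition hadd K deg G p (f g : @homp K deg G p) : homp deg G p :=
  [ffun x => f x + g x].
Definition hsub K deg G p (f g : @homp K deg G p) : homp deg G p :=
  [ffun x => f x - g x].

(* the differential delta^p : hom^p -> hom^(p+1),
   (delta^p f)_n = f_(n-1) d^C_n - (-1)^p d^G_(n-p) f_n *)
Definition delta (K : finType) (deg : K -> int) (a : K -> K -> int)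
  (G : int -> finZmodType) (dG : forall n, G n -> G (n - 1)) (p : int)
  (f : homp deg G p) : homp deg G (p + 1) :=
  [ffun x => \sum_(y | deg y == deg x - 1)
                 @gcast G (deg y - p) (deg x - (p + 1)) (f y *~ a x y)
             - @gcast G (deg x - p - 1) (deg x - (p + 1))
                 (dG (deg x - p) (f x) *~ ((-1) ^ p))].

Definition chainC (K : finType) (deg : K -> int) (a : K -> K -> int) :=
  forall x z : K, deg z = deg x - 2 ->
    \sum_(y | deg y == deg x - 1) a x y * a y z = 0.
Definition chainG (G : int -> finZmodType) (dG : forall n, G n -> G (n - 1)) :=
  (forall n (g h : G n), dG n (g - h) = dG n g - dG n h) /\
  (forall n (g : G n), dG (n - 1) (dG n g) = 0).

(* m in hom(C,G)_0 = Hom(hom(C,G)^0, U(1)) : a homomorphism into the unit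
   circle of the complex field CC *)
Definition U1_char (CC : numClosedFieldType) K deg G
  (m : @homp K deg G 0 -> CC) :=
  (forall f g, m (hadd f g) = m f * m g) /\ (forall f, `|m f| = 1).

(* the Hilbert space: CC-valued functions on the basis hom(C,G)^0 *)
Notation hilb CC deg G := {ffun homp deg G 0 -> CC}.

Definition ket (CC : numClosedFieldType) K deg G (f : @homp K deg G 0)
  : hilb CC deg G := [ffun g => (g == f)%:R].

Definition Qop (CC : numClosedFieldType) K deg G (m : @homp K deg G 0 -> CC)
  (v : hilb CC deg G) : hilb CC deg G := [ffun g => m g * v g].

(* P_t |f> = |f + t> *)
Definition Pop (CC : numClosedFieldType) K deg G (t : @homp K deg G 0)
  (v : hilb CC deg G) : hilb CC deg G := [ffun g => v (hsub g t)].

Definition Aop (CC : numClosedFieldType) K deg a G dG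
  (t : @homp K deg G (-1)) (v : hilb CC deg G) : hilb CC deg G :=
  Pop (@delta K deg a G dG (-1) t) v.

Definition A0op (CC : numClosedFieldType) K deg a G dG
  (v : hilb CC deg G) : hilb CC deg G :=
  [ffun g => (#|{: @homp K deg G (-1)}|%:R : CC)^-1 *
             \sum_(t : homp deg G (-1)) Aop a dG t v g].

Definition scalar_multiple (CC : numClosedFieldType) K deg G
  (u v : hilb CC deg G) : Prop :=
  exists c : CC, forall g : @homp K deg G 0, u g = c * v g.

(* Main.v *)
Require Import Defs.
From HB Require Import structures.
From mathcomp Require Import all_boot all_order all_algebra.
Import Order.TTheory GRing.Theory Num.Theory.
Local Open Scope ring_scope.
Set Implicit Arguments. Unset Strict Implicit.

Lemma gcast0 (G : int -> finZmodType) n k : @gcast G n k 0 = 0.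
Proof. rewrite /gcast; case: eqP => // e; by case: k / e. Qed.

Lemma delta0 K deg a G dG (hG : chainG dG) p :
  @delta K deg a G dG p (hzero deg G p) = hzero deg G (p + 1).
Proof.
apply/ffunP => x; rewrite !ffunE big1 => [|y _]; last by rewrite ffunE mul0rz gcast0.
have -> : dG (deg x - p) 0 = 0.
  by rewrite -(subrr (0 : G (deg x - p))) hG.1 subrr.
by rewrite mul0rz gcast0 subrr.
Qed.

Lemma m0 (CC : numClosedFieldType) K deg G (m : @homp K deg G 0 -> CC) :
  U1_char m -> m (hzero deg G 0) = 1.
Proof.
move=> [hM hN].
have e : hadd (hzero deg G 0) (hzero deg G 0) = hzero deg G 0.
  by apply/ffunP => x; rewrite !ffunE; exact: addr0.
have := hM (hzero deg G 0) (hzero deg G 0); rewrite e => h.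
have nz : m (hzero deg G 0) != 0 by rewrite -normr_eq0 hN oner_eq0.
by apply: (mulfI nz); rewrite mulr1 -h.
Qed.

Theorem proposition6 (CC : numClosedFieldType) (K : finType) (deg : K -> int)
  (a : K -> K -> int) (G : int -> finZmodType)
  (dG : forall n : int, G n -> G (n - 1))
  (hC : chainC deg a) (hG : chainG dG)
  (m : homp deg G 0 -> CC) (hm : U1_char m) :
  (forall f : homp deg G 0, delta a dG f = hzero deg G (0 + 1) ->
     scalar_multiple (Qop m (A0op a dG (ket CC f))) (A0op a dG (ket CC f)))
  <-> (forall t : homp deg G (-1), m (delta a dG t) = 1).
Proof.
have hsubE : forall (f g t : homp deg G 0), hsub g t = f -> g = hadd f t.
  move=> f g t e; apply/ffunP => x; rewrite ffunE -e ffunE subrK //.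
split.
- move=> H t0.
  have [c Hc] := H (hzero deg G 0) (@delta0 _ _ a _ dG hG 0).
  have key : forall t : homp deg G (-1), m (delta a dG t) = c.
    move=> t; have := Hc (delta a dG t); rewrite /A0op /Qop !ffunE.
    move=> h; apply: (mulIf _ h).
    rewrite mulf_eq0 negb_or invr_eq0 pnatr_eq0 -lt0n; apply/andP; split.
      by apply/card_gt0P; exists t.
    rewrite (bigD1 t) //= /Aop /Pop /ket !ffunE.
    have hz : forall d : homp deg G 0, hsub d d == hzero deg G 0.
      by move=> d; apply/eqP/ffunP => x; rewrite !ffunE; exact: subrr.
    rewrite hz.
    rewrite paddr_eq0 ?oner_eq0 //; apply: sumr_ge0 => i _; rewrite !ffunE ler0n //.
  by rewrite key -(key (hzero deg G (-1))) (@delta0 _ _ a _ dG hG) (m0 hm).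
- move=> H f _; exists (m f) => g; rewrite /A0op /Qop !ffunE.
  rewrite mulrCA [m f * _]mulrCA; congr (_ * _).
  rewrite !mulr_sumr; apply: eq_bigr => t _; rewrite /Aop /Pop /ket !ffunE.
  case: eqP => [e|]; last by rewrite !mulr0.
  rewrite (hsubE _ _ _ e) hm.1 H; congr (_ * _); exact: mulr1.
Qed.
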